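(* Let $M\ge 2$, $D,Q,K$ positive integers, and let $\varphi:\mathbb{R}^D\times R\to\mathbb{R}^K$ be a function on a parameter set $R$ such that for every $\bm{x}\in\mathbb{R}^D$ there exists $\rho\in R$ with $\varphi(\bm{x};\rho)\neq\bm{0}$. Consider networks $\mathcal{F}=\{F_i\}_{i=1}^M$ with $F_i(\bm{x})=\bm{W}^i\varphi(\bm{x};\rho^i)$, $\bm{W}^i\in\mathbb{R}^{Q\times K}$, $\rho^i\in R$, and a nonempty finite data set $\mathcal{D}=\{(\bm{x}_n,\bm{y}_n)\}_{n=1}^N\subset\mathbb{R}^D\times\mathbb{R}^Q$. Let $$E_\lambda(\mathcal{F},\mathcal{D}) = \frac{1}{N}\sum_{n=1}^N\Big(\frac{1}{M}\sum_{i=1}^M\|F_i(\bm{x}_n)-\bm{y}_n\|^2-\lambda\frac{1}{M}\sum_{i=1}^M\|F_i(\bm{x}_n)-\overline{F}(\bm{x}_n)\|^2\Big),\quad \overline{F}=\tfrac1M\textstyle\sum_i F_i.$$ Fix $i\in\{1,\dots,M\}$ and fix $F_j$ for all $j\neq i$. With infima over all parametrisations $(\bm{W}^i,\rho^i)$ of $F_i$ only: (i) if $\lambda<\frac{M}{M-1}$ then $\inf E_\lambda(\mathcal{F},\mathcal{D})>-\infty$; (ii) if $\lambda>\frac{M}{M-1}$ then $\inf E_\lambda(\mathcal{F},\mathcal{D})=-\infty$.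
   Context: $\|\cdot\|$ is the Euclidean norm. *)

(* Defs.v *)
From HB Require Import structures.
From mathcomp Require Import all_boot all_order all_algebra.
From mathcomp Require Import reals.
Set Implicit Arguments. Unset Strict Implicit. Unset Printing Implicit Defensive.
Import Order.TTheory GRing.Theory Num.Theory.
Local Open Scope ring_scope.

Definition sqnorm (R : realType) (n : nat) (v : 'cV[R]_n) : R :=
  \sum_(k < n) (v k ord0) ^+ 2.

Definition network (R : realType) (Rho : Type) (D Q K M : nat)
  (phi : 'cV[R]_D -> Rho -> 'cV[R]_K)
  (Ws : 'I_M -> 'M[R]_(Q, K)) (rhos : 'I_M -> Rho) (j : 'I_M) (x : 'cV[R]_D)
  : 'cV[R]_Q := Ws j *m phi x (rhos j).

Definition upd (I : eqType) (T : Type) (f : I -> T) (i : I) (a : T) : I -> T :=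
  fun j => if j == i then a else f j.

Definition Fbar (R : realType) (D Q M : nat) (F : 'I_M -> 'cV[R]_D -> 'cV[R]_Q)
  (x : 'cV[R]_D) : 'cV[R]_Q := (M%:R)^-1 *: \sum_(i < M) F i x.

Definition energy (R : realType) (D Q M N : nat) (lam : R)
  (F : 'I_M -> 'cV[R]_D -> 'cV[R]_Q)
  (xs : 'I_N -> 'cV[R]_D) (ys : 'I_N -> 'cV[R]_Q) : R :=
  (N%:R)^-1 * \sum_(n < N)
    ((M%:R)^-1 * \sum_(i < M) sqnorm (F i (xs n) - ys n)
     - lam * ((M%:R)^-1 * \sum_(i < M) sqnorm (F i (xs n) - Fbar F (xs n)))).

(* Main.v *)
Require Import Defs.
From HB Require Import structures.
From mathcomp Require Import all_boot all_order all_algebra.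
From mathcomp Require Import reals.
From mathcomp Require Import ring lra.
Import Order.TTheory GRing.Theory Num.Theory.
Local Open Scope ring_scope.

Definition Sc (R : realType) (M : nat) (lam : R) (a : 'I_M -> R) (y : R) : R :=
  (M%:R)^-1 * \sum_(j < M) (a j - y) ^+ 2
  - lam * ((M%:R)^-1 * \sum_(j < M) (a j - (M%:R)^-1 * \sum_(l < M) a l) ^+ 2).

Arguments Sc {R M}.

Lemma Sc_ext (R : realType) (M : nat) (lam : R) (a b : 'I_M -> R) (y : R) :
  (forall j, a j = b j) -> Sc lam a y = Sc lam b y.
Proof.
move=> h; rewrite /Sc.
have -> : \sum_(l < M) a l = \sum_(l < M) b l by apply: eq_bigr => l _; rewrite h.
by congr (_ * _ - _ * (_ * _)); apply: eq_bigr => j _; rewrite h.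
Qed.

Lemma energy_Sc (R : realType) (D Q M N : nat) (lam : R)
  (F : 'I_M -> 'cV[R]_D -> 'cV[R]_Q)
  (xs : 'I_N -> 'cV[R]_D) (ys : 'I_N -> 'cV[R]_Q) :
  energy lam F xs ys = (N%:R)^-1 * \sum_(n < N) \sum_(k < Q)
     Sc lam (fun j => F j (xs n) k ord0) (ys n k ord0).
Proof.
rewrite /energy; congr (_ * _); apply: eq_bigr => n _.
rewrite /Sc /sqnorm sumrB; congr (_ - _).
  rewrite [in LHS]exchange_big /= mulr_sumr; apply: eq_big => // k _; congr (_ * _).
  by apply: eq_bigr => j _; rewrite !mxE.
rewrite [in LHS]exchange_big /= !mulr_sumr; apply: eq_big => // k _.
congr (_ * (_ * _)).
apply: eq_bigr => j _; rewrite /Fbar !(mxE, summxE).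
by [].
Qed.

Lemma var_id (R : realType) (M : nat) (b : 'I_M -> R) : (0 < M)%N ->
  \sum_(j < M) (b j - (M%:R)^-1 * \sum_(l < M) b l) ^+ 2
  = \sum_(j < M) b j ^+ 2 - (M%:R)^-1 * (\sum_(l < M) b l) ^+ 2.
Proof.
move=> hM.
set s := (M%:R)^-1 * _.
have -> : \sum_(j < M) (b j - s) ^+ 2
   = \sum_(j < M) b j ^+ 2 - (2 * s) * \sum_(j < M) b j + \sum_(j < M) s ^+ 2.
  rewrite mulr_sumr -sumrB -big_split /=; apply: eq_bigr => j _; ring.
rewrite sumr_const card_ord -mulr_natr /s.
have hm : (M%:R : R) != 0 by rewrite pnatr_eq0 -lt0n.
field; exact: hm.
Qed.
Section Q.
Variables (R : realType) (M : nat) (lam : R).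
Let m : R := M%:R.
Definition ccoef : R := m^-1 - lam * m^-1 + lam * m^-1 * m^-1.
Definition bcoef (a : 'I_M -> R) (i : 'I_M) (y : R) : R :=
  m^-1 * (-2 * y) + lam * m^-1 * m^-1 * (2 * \sum_(j | j != i) a j).
Definition dcoef (a : 'I_M -> R) (i : 'I_M) (y : R) : R :=
  m^-1 * (y ^+ 2 + \sum_(j | j != i) (a j - y) ^+ 2)
  - lam * m^-1 * (\sum_(j | j != i) a j ^+ 2 - m^-1 * (\sum_(j | j != i) a j) ^+ 2).

Lemma upd_sum (a : 'I_M -> R) i v (f : R -> R) :
  \sum_(j | j != i) f (upd a i v j) = \sum_(j | j != i) f (a j).
Proof. by apply: eq_bigr => j /negPf hj; rewrite /upd hj. Qed.

Lemma Sc_upd (a : 'I_M -> R) i v y : (0 < M)%N ->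
  Sc lam (upd a i v) y = ccoef * v ^+ 2 + bcoef a i y * v + dcoef a i y.
Proof.
move=> hM; rewrite /Sc var_id //.
rewrite (bigD1 i) //= (bigD1 i (P := xpredT)) //= (bigD1 i (P := xpredT)) //=.
rewrite !(upd_sum a i v (fun z => (z - y) ^+ 2)) !(upd_sum a i v (fun z => z ^+ 2)).
rewrite !(upd_sum a i v id) /upd eqxx /ccoef /bcoef /dcoef -/m.
ring.
Qed.
End Q.
Arguments ccoef {R} M lam.
Arguments bcoef {R M} lam a i y.
Arguments dcoef {R M} lam a i y.
Lemma quad_lb (R : realType) (c b d v : R) : 0 < c ->
  d - b ^+ 2 / (4 * c) <= c * v ^+ 2 + b * v + d.
Proof.
move=> hc.
have hc0 : c != 0 by rewrite gt_eqF.
have -> : c * v ^+ 2 + b * v + d = c * (v + b / (2 * c)) ^+ 2 + (d - b ^+ 2 / (4 * c)).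
  by field; rewrite ?mulf_neq0 ?pnatr_eq0.
rewrite lerDr; apply: mulr_ge0; [exact: ltW | exact: sqr_ge0].
Qed.

Lemma quad_neg (R : realType) (al be ga B : R) : al < 0 ->
  exists t, al * t ^+ 2 + be * t + ga < B.
Proof.
move=> ha.
set u := - al. have hu : 0 < u by rewrite /u oppr_gt0.
set K := `|be| + `|ga - B| + 1.
have hK : 0 < K by rewrite /K; have := normr_ge0 be; have := normr_ge0 (ga - B); lra.
exists (1 + K / u).
set t := 1 + K / u.
have ht1 : 1 <= t by rewrite /t lerDl; apply: divr_ge0; exact: ltW.
have hut : u * t = u + K by rewrite /t; field; rewrite gt_eqF.
have h1 : be * t <= `|be| * t by apply: ler_wpM2r; [lra | exact: ler_norm].
have h2 : ga - B <= `|ga - B| by exact: ler_norm.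
have e : al * t ^+ 2 = - (u * t) * t by rewrite /u expr2; ring.
rewrite e.
have h3 : `|ga - B| <= `|ga - B| * t.
  by rewrite -{1}(mulr1 `|ga - B|); apply: ler_wpM2l; [exact: normr_ge0 | lra].
have h4 : 0 <= u * t by rewrite hut; lra.
have hKt : K * t = `|be| * t + `|ga - B| * t + t by rewrite /K; ring.
have -> : - (u * t) * t = - (u * t) - K * t by rewrite [in LHS]hut; ring.
lra.
Qed.

Lemma sum_quad (R : realType) (I : finType) (f g h : I -> R) (t : R) :
  \sum_(x : I) (f x * t ^+ 2 + g x * t + h x)
  = (\sum_x f x) * t ^+ 2 + (\sum_x g x) * t + \sum_x h x.
Proof. by rewrite !big_split /= !mulr_suml. Qed.
Theorem theorem6 (R : realType) (Rho : Type) (M D Q K N : nat)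
  (hM : (2 <= M)%N) (hD : (0 < D)%N) (hQ : (0 < Q)%N) (hK : (0 < K)%N)
  (phi : 'cV[R]_D -> Rho -> 'cV[R]_K)
  (hphi : forall x : 'cV[R]_D, exists rho : Rho, phi x rho != 0)
  (hN : (0 < N)%N) (xs : 'I_N -> 'cV[R]_D) (ys : 'I_N -> 'cV[R]_Q)
  (Ws : 'I_M -> 'M[R]_(Q, K)) (rhos : 'I_M -> Rho) (i : 'I_M) (lam : R) :
  (lam < M%:R / (M%:R - 1) ->
     exists B : R, forall (W : 'M[R]_(Q, K)) (rho : Rho),
       B <= energy lam (network phi (upd Ws i W) (upd rhos i rho)) xs ys)
  /\
  (lam > M%:R / (M%:R - 1) ->
     forall B : R, exists (W : 'M[R]_(Q, K)) (rho : Rho),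
       energy lam (network phi (upd Ws i W) (upd rhos i rho)) xs ys < B).
Proof.
have hM0 : (0 < M)%N by apply: leq_trans hM.
have hm2 : (2 : R) <= M%:R by rewrite (ler_nat R 2 M).
have hm1 : 0 < (M%:R : R) - 1 by lra.
have hm0 : (M%:R : R) != 0 by rewrite gt_eqF //; lra.
have hcc : ccoef M lam = (M%:R - lam * (M%:R - 1)) / (M%:R ^+ 2).
  by rewrite /ccoef; field.
have hN0 : 0 < (N%:R : R)^-1 by rewrite invr_gt0 ltr0n.
set a := fun (n : 'I_N) (k : 'I_Q) (j : 'I_M) => network phi Ws rhos j (xs n) k ord0.
have key : forall W rho n k,
  Sc lam (fun j => network phi (upd Ws i W) (upd rhos i rho) j (xs n) k ord0) (ys n k ord0)
  = ccoef M lam * ((W *m phi (xs n) rho) k ord0) ^+ 2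
    + bcoef lam (a n k) i (ys n k ord0) * (W *m phi (xs n) rho) k ord0
    + dcoef lam (a n k) i (ys n k ord0).
  move=> W rho n k; rewrite -Sc_upd //; apply: Sc_ext => j.
  by rewrite /a /network /upd; case: (j == i).
split.
  move=> hl.
  have hc : 0 < ccoef M lam.
    rewrite hcc; apply: divr_gt0; last by apply: exprn_gt0; lra.
    by move: hl; rewrite ltr_pdivlMr //; lra.
  exists ((N%:R)^-1 * \sum_(n < N) \sum_(k < Q)
     (dcoef lam (a n k) i (ys n k ord0) - bcoef lam (a n k) i (ys n k ord0) ^+ 2 / (4 * ccoef M lam))).
  move=> W rho; rewrite energy_Sc; apply: ler_wpM2l; first exact: ltW.
  apply: ler_sum => n _; apply: ler_sum => k _; rewrite key; exact: quad_lb.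
move=> hl B.
have hc : ccoef M lam < 0.
  rewrite hcc pmulr_llt0; last by rewrite invr_gt0; apply: exprn_gt0; lra.
  by move: hl; rewrite ltr_pdivrMr //; lra.
set n0 : 'I_N := Ordinal hN.
have [rho hr] := hphi (xs n0).
set p := phi (xs n0) rho.
set s := fun n : 'I_N => \sum_(l < K) p l ord0 * phi (xs n) rho l ord0.
set al := (N%:R)^-1 * \sum_(n < N) \sum_(k < Q) (ccoef M lam * s n ^+ 2).
set be := (N%:R)^-1 * \sum_(n < N) \sum_(k < Q) (bcoef lam (a n k) i (ys n k ord0) * s n).
set ga := (N%:R)^-1 * \sum_(n < N) \sum_(k < Q) dcoef lam (a n k) i (ys n k ord0).
have hs0 : 0 < s n0.
  have -> : s n0 = \sum_(l < K) p l ord0 ^+ 2 by apply: eq_bigr => l _; rewrite expr2.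
  rewrite lt0r sumr_ge0 ?andbT; last by move=> l _; exact: sqr_ge0.
  apply/eqP => h; move/negP: hr; apply; apply/eqP/matrixP => l j.
  rewrite ord1 mxE; apply/eqP; rewrite -sqrf_eq0; apply/eqP.
  exact: (psumr_eq0P (fun l _ => sqr_ge0 (p l ord0)) h).
have hS : 0 < \sum_(n < N) \sum_(k < Q) s n ^+ 2.
  rewrite (bigD1 n0) //=.
  have h1 : 0 < \sum_(k < Q) s n0 ^+ 2.
    by rewrite sumr_const card_ord pmulrn_lgt0 //; apply: exprn_gt0.
  have h2 : 0 <= \sum_(n < N | n != n0) \sum_(k < Q) s n ^+ 2.
    by apply: sumr_ge0 => n _; apply: sumr_ge0 => k _; exact: sqr_ge0.
  lra.
have hal : al < 0.
  have -> : al = (N%:R)^-1 * (ccoef M lam * \sum_(n < N) \sum_(k < Q) s n ^+ 2).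
    rewrite /al [in RHS]mulr_sumr; congr (_ * _); apply: eq_bigr => n _; by rewrite mulr_sumr.
  have : ccoef M lam * \sum_(n < N) \sum_(k < Q) s n ^+ 2 < 0 by nra.
  nra.
have [t ht] := @quad_neg R al be ga B hal.
exists (t *: (\matrix_(q, l) p l ord0 : 'M[R]_(Q, K))), rho.
have ent : forall (n : 'I_N) (k : 'I_Q), ((t *: (\matrix_(q, l) p l ord0 : 'M[R]_(Q, K))) *m phi (xs n) rho) k ord0 = t * s n.
  move=> n k; rewrite mxE /s mulr_sumr; apply: eq_bigr => l _.
  by rewrite !mxE mulrA.
rewrite energy_Sc.
have -> : \sum_(n < N) \sum_(k < Q)
    Sc lam (fun j => network phi (upd Ws i (t *: (\matrix_(q, l) p l ord0 : 'M[R]_(Q, K)))) (upd rhos i rho) j (xs n) k ord0) (ys n k ord0)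
  = \sum_(n < N) \sum_(k < Q) ((ccoef M lam * s n ^+ 2) * t ^+ 2
       + (bcoef lam (a n k) i (ys n k ord0) * s n) * t + dcoef lam (a n k) i (ys n k ord0)).
  apply: eq_bigr => n _; apply: eq_bigr => k _; rewrite key ent; ring.
under eq_bigr => n _ do rewrite sum_quad.
rewrite sum_quad.
suff -> : (N%:R)^-1 * ((\sum_(n < N) \sum_(k < Q) (ccoef M lam * s n ^+ 2)) * t ^+ 2 +
   (\sum_(n < N) \sum_(k < Q) (bcoef lam (a n k) i (ys n k ord0) * s n)) * t +
   \sum_(n < N) \sum_(k < Q) dcoef lam (a n k) i (ys n k ord0)) = al * t ^+ 2 + be * t + ga by [].
rewrite /al /be /ga; ring.
Qed.
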